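(* For all integers $t\ge k$ and all $i$ with $0\le i\le\rho(m)-1$, \[ \mu_i\;\le\;\sum_{j=1}^{k} x^{\alpha_i}(t-j)\;\le\;1+\mu_i . \]
   Context: For $u\in\mathbb{R}$ let $\mathbf 1[u]=1$ if $u\ge 0$ and $\mathbf 1[u]=0$ if $u<0$. Let $m$ be a positive integer and let $\rho(m)$ denote the number of primes $p$ with $2m<p<3m$; assume $\rho(m)\ge 2$. List these primes as $p_0>p_1>\dots>p_{\rho(m)-1}$ and put $\alpha_i=3m-p_i$. Let $k=(6m-1)\rho(m)$, $\mu_i=\lfloor k/p_i\rfloor$, $\beta_i=k-p_i\mu_i$. Define weights $\bar a_j$, $1\le j\le k$: if $\rho(m)$ is even, $\bar a_j=2$ if $j=\ell p_i$ for some $i$ and some $\ell$ with $1\le \ell\le 3\rho(m)/2$, $\bar a_j=-2$ if $j=\ell p_i$ with $3\rho(m)/2<\ell\le 2\rho(m)$, and $\bar a_j=0$ otherwise; if $\rho(m)$ is odd, $\bar a_j=2$ if $j=\ell p_i$ with $1\le\ell\le (3\rho(m)-1)/2$, $\bar a_j=-2$ if $j=\ell p_i$ with $(3\rho(m)+1)/2\le \ell\le 2\rho(m)-2$, $\bar a_j=-1$ if $j=\ell p_i$ with $\ell\in\{2\rho(m)-1,2\rho(m)\}$, and $\bar a_j=0$ otherwise (well defined since the sets $\{\ell p_i:1\le\ell\le2\rho(m)\}$ are pairwise disjoint). Let $\bar\theta=2\rho(m)$. For each $i$ define $x^{\alpha_i}(t)$ for $0\le t\le k-1$ by $x^{\alpha_i}(t)=1$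 if $t=\beta_i+\ell p_i$ for some $0\le \ell\le\mu_i-1$ and $x^{\alpha_i}(t)=0$ otherwise, and for $t\ge k$ by $x^{\alpha_i}(t)=\mathbf 1\big[\sum_{j=1}^k \bar a_j x^{\alpha_i}(t-j)-\bar\theta\big]$. *)

(* Defs.v *)
From HB Require Import structures.
From mathcomp Require Import all_boot all_order all_algebra.
Set Implicit Arguments. Unset Strict Implicit. Unset Printing Implicit Defensive.
Import Order.TTheory GRing.Theory Num.Theory.

(* primes p with 2m < p < 3m, listed in decreasing order p_0 > p_1 > ... *)
Definition primes_between (m : nat) : seq nat :=
  [seq p <- rev (iota 0 (3 * m)) | prime p && (2 * m < p)].

Definition rho (m : nat) : nat := size (primes_between m).

Definition pr (m i : nat) : nat := nth 0 (primes_between m) i.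

Definition alpha (m i : nat) : nat := 3 * m - pr m i.

Definition kk (m : nat) : nat := (6 * m - 1) * rho m.
Definition mu (m i : nat) : nat := kk m %/ pr m i.
Definition beta (m i : nat) : nat := kk m %% pr m i.

(* weight attached to j = l * p_i, 1 <= l <= 2 rho *)
Definition wt (r l : nat) : int :=
  if ~~ odd r then
    (if l <= (3 * r) %/ 2 then Posz 2 else (-2)%R)
  else
    (if l <= (3 * r - 1) %/ 2 then Posz 2
     else if l <= 2 * r - 2 then (-2)%R else (-1)%R).

(* \bar a_j : weight wt(l) if j = l * p_i for some i < rho and 1 <= l <= 2 rho,
   0 otherwise (the index i is unique: the sets {l p_i} are disjoint) *)
Definition abar (m j : nat) : int :=
  let r := rho m in
  match [seq i <- iota 0 r | (pr m i %| j) && (0 < j %/ pr m i <= 2 * r)] with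
  | i :: _ => wt r (j %/ pr m i)
  | [::] => 0%R
  end.

Definition theta (m : nat) : int := Posz (2 * rho m).

Definition x_init (m i t : nat) : bool :=
  has (fun l => t == beta m i + l * pr m i) (iota 0 (mu m i)).

(* next value given the history h = [x(0); ...; x(n-1)] *)
Definition x_next (m i n : nat) (h : seq bool) : bool :=
  if n < kk m then x_init m i n
  else (theta m <= \sum_(1 <= j < (kk m).+1) abar m j * Posz (nth false h (n - j) : nat))%R.

Fixpoint x_hist (m i n : nat) : seq bool :=
  match n with
  | 0 => [::]
  | n'.+1 => let h := x_hist m i n' in rcons h (x_next m i n' h)
  end.

(* x^{alpha_i}(t) as a 0/1 value *)
Definition x (m i t : nat) : nat := nth false (x_hist m i t.+1) t.

(* Main.v *)
Require Import Defs.
From mathcomp Require Import all_boot all_order all_algebra.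
From mathcomp Require Import zify.
Import Order.TTheory GRing.Theory Num.Theory.
Set Implicit Arguments.
Unset Strict Implicit.

Lemma sum_pick (R : nmodType) (a n J : nat) (F : nat -> R) :
  a <= J < n -> (\sum_(a <= j < n) (if j == J then F j else 0) = F J)%R.
Proof.
move=> /andP[aJ Jn].
rewrite (big_cat_nat (n:=J)) /=; [|done|exact: ltnW].
rewrite [X in (X + _)%R]big1_seq; last first.
  by move=> j; rewrite mem_index_iota => /andP[_ /andP[_ h]]; rewrite (ltn_eqF h).
rewrite big_ltn // eqxx add0r big1_seq ?addr0 //.
by move=> j; rewrite mem_index_iota => /andP[_ /andP[h _]]; rewrite (gtn_eqF h).
Qed.

Lemma sum_le1 (a n : nat) (P : nat -> bool) :
  (forall l1 l2, a <= l1 < n -> a <= l2 < n -> P l1 -> P l2 -> l1 = l2) ->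
  \sum_(a <= l < n) (P l : nat) <= 1.
Proof.
elim: n => [|n IH] H; first by rewrite big_geq.
case: (leqP a n) => an; last by rewrite big_geq.
rewrite big_nat_recr //=.
case Pn: (P n); last by rewrite addn0 IH // => l1 l2 h1 h2; apply: H; lia.
rewrite big1_seq //= => l; rewrite mem_index_iota => hl.
case Pl: (P l) => //.
have := H l n; rewrite Pl Pn; lia.
Qed.

Lemma reidx (F : nat -> nat) k t : k <= t ->
  \sum_(1 <= j < k.+1) F (t - j) = \sum_(t - k <= s < t) F s.
Proof.
elim: k => [|k IH] hk; first by rewrite !big_geq // subn0.
rewrite big_nat_recr //= IH ?(ltnW hk) //.
rewrite [in RHS](@big_ltn _ _ _ (t - k.+1)); last lia.
by rewrite addnC; congr (_ + _); congr (\sum_(_ <= _ < _) _); lia.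
Qed.

Lemma win1 p b a : 0 < p -> b < p ->
  \sum_(a <= s < a + p) ((s %% p == b) : nat) = 1.
Proof.
move=> p0 bp; elim: a => [|a IH].
  rewrite add0n -(@sum_pick nat 0 p b (fun _ => 1)) ?bp //.
  apply: eq_big_nat => s0 /andP[_ sp]; rewrite modn_small //; by case: (s0 == b).
have e1 : \sum_(a <= s < a + p) ((s %% p == b) : nat) + ((a + p) %% p == b)
  = ((a %% p == b) : nat) + \sum_(a.+1 <= s < a.+1 + p) ((s %% p == b) : nat).
  rewrite -big_nat_recr; last lia.
  rewrite big_ltn; last lia. by rewrite addSn.
move: e1; rewrite IH modnDr; lia.
Qed.

Lemma winq p b a q : 0 < p -> b < p ->
  \sum_(a <= s < a + q * p) ((s %% p == b) : nat) = q.
Proof.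
move=> p0 bp; elim: q => [|q IH]; first by rewrite big_geq // mul0n addn0.
rewrite (big_cat_nat _ (n := a + q * p)); try lia.
rewrite IH /= mulSn (addnC p) addnA win1 //; lia.
Qed.

Lemma window p b a q r : 0 < p -> b < p -> r < p ->
  q <= \sum_(a <= s < a + (q * p + r)) ((s %% p == b) : nat) <= q.+1.
Proof.
move=> p0 bp rp.
rewrite (big_cat_nat _ (n := a + q * p)); try lia.
rewrite winq //= leq_addr /= -addn1 leq_add2l.
rewrite -(@win1 p b (a + q * p) p0 bp) addnA.
rewrite [X in _ <= X](big_cat_nat (n := a + q * p + r)) /=; try lia.
Qed.

Lemma pb_mem m p : (p \in primes_between m) = [&& prime p, 2 * m < p & p < 3 * m].
Proof.
rewrite mem_filter mem_rev mem_iota /=; by case: (prime p); case: (2 * m < p).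
Qed.

Lemma pr_facts m a : a < rho m -> [/\ prime (pr m a), 2 * m < pr m a & pr m a < 3 * m].
Proof.
move=> ha; have := mem_nth 0 ha; rewrite -/(pr m a) pb_mem.
by case/and3P.
Qed.

Lemma pb_uniq m : uniq (primes_between m).
Proof. by apply: filter_uniq; rewrite rev_uniq iota_uniq. Qed.

Lemma pr_inj m a b : a < rho m -> b < rho m -> pr m a = pr m b -> a = b.
Proof. move=> ha hb e; apply/eqP; rewrite -(nth_uniq 0 ha hb (pb_uniq m)); by apply/eqP. Qed.

Lemma rho_le m : rho m <= m - 1.
Proof.
rewrite /rho -(size_iota (2 * m).+1 (m - 1)).
apply: uniq_leq_size; first exact: pb_uniq.
move=> p; rewrite pb_mem mem_iota => /and3P[_ h1 h2]; lia.
Qed.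

Lemma size_hist m i n : size (x_hist m i n) = n.
Proof. elim: n => //= n IH; by rewrite size_rcons IH. Qed.

Lemma nth_hist m i n s : s < n -> nth false (x_hist m i n) s = nth false (x_hist m i s.+1) s.
Proof.
elim: n => // n IH hs; rewrite /= nth_rcons size_hist.
case: (ltngtP s n) => h; first by rewrite IH.
- lia.
- subst; by rewrite /= nth_rcons size_hist ltnn eqxx.
Qed.

Definition Pab m j a := (pr m a %| j) && (0 < j %/ pr m a <= 2 * rho m).

Lemma Pab_uniq m j a b : a < rho m -> b < rho m -> Pab m j a -> Pab m j b -> a = b.
Proof.
move=> ha hb /andP[da ra] /andP[db rb].
have [pa1 pa2 pa3] := pr_facts ha; have [pb1 pb2 pb3] := pr_facts hb.
have hr := rho_le m.
case: (eqVneq (pr m a) (pr m b)) => e; first exact: pr_inj ha hb e.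
have : pr m a %| j %/ pr m b * pr m b by rewrite divnK.
rewrite Euclid_dvdM // (dvdn_prime2 pa1 pb1) (negbTE e) orbF => /dvdn_leq.
lia.
Qed.

Lemma inner m j a : a < rho m ->
  (\sum_(1 <= l < (2 * rho m).+1) (if j == l * pr m a then wt (rho m) l else 0) =
   if Pab m j a then wt (rho m) (j %/ pr m a) else 0)%R.
Proof.
move=> ha; have [pa1 pa2 pa3] := pr_facts ha.
have p0 : 0 < pr m a by lia.
case P: (Pab m j a).
  move: P => /andP[d rg].
  rewrite -(@sum_pick _ 1 (2 * rho m).+1 (j %/ pr m a) (wt (rho m))); last lia.
  apply: eq_big_nat => l _.
  by rewrite -{1}(divnK d) eqn_pmul2r // eq_sym.
rewrite big1_seq // => l; rewrite mem_index_iota => hl.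
case: eqP => // ej; move: P; rewrite /Pab ej dvdn_mull // mulnK //.
lia.
Qed.

Lemma abar_dec m j :
  abar m j = (\sum_(0 <= a < rho m) \sum_(1 <= l < (2 * rho m).+1)
     (if j == l * pr m a then wt (rho m) l else 0))%R.
Proof.
rewrite (eq_big_nat _ _ (fun a ha => inner j (proj2 (andP ha)))).
rewrite -big_mkcond /= -big_filter /abar /index_iota subn0 -/(Pab m j).
have U : uniq [seq a <- iota 0 (rho m) | Pab m j a] by apply: filter_uniq; apply: iota_uniq.
have A : forall a b, a \in [seq a <- iota 0 (rho m) | Pab m j a] ->
   b \in [seq a <- iota 0 (rho m) | Pab m j a] -> a = b.
  move=> a b; rewrite !mem_filter !mem_iota /= => /andP[pa ha] /andP[pb hb].
  apply: (Pab_uniq (j := j)) => //; lia.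
move: U A; case: [seq a <- iota 0 (rho m) | Pab m j a] => [|a [|b s]] U A.
- by rewrite big_nil.
- by rewrite big_seq1.
- have e := A a b (mem_head _ _) (ltac:(by rewrite inE mem_head orbT)).
  by move: U; rewrite e /= inE eqxx.
Qed.

Lemma wt_le2 r l : (wt r l <= 2)%R.
Proof. rewrite /wt; by repeat case: ifP. Qed.

Lemma wt_sum r : 2 <= r -> (\sum_(1 <= l < (2 * r).+1) wt r l = Posz (2 * r))%R.
Proof.
move=> hr; rewrite /wt.
case: (boolP (odd r)) => o /=.
- have [q hq] : exists q, r = (2 * q).+1.
    exists r./2; have := odd_double_half r; rewrite o -muln2; lia.
  have e1 : (3 * r - 1) %/ 2 = 3 * q + 1 by lia.
  rewrite e1.
  rewrite (big_cat_nat (n := 3 * q + 2)) /=; try lia.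
  rewrite [X in (_ + X)%R](big_cat_nat (n := 4 * q + 1)) /=; try lia.
  rewrite (eq_big_nat _ _ (F2 := fun _ => Posz 2)); last by move=> l hl; rewrite ifT //; lia.
  rewrite [X in (_ + (X + _))%R](eq_big_nat _ _ (F2 := fun _ => (-2 : int)%R)); last first.
    by move=> l hl; rewrite ifF; [rewrite ifT //|]; lia.
  rewrite [X in (_ + (_ + X))%R](eq_big_nat _ _ (F2 := fun _ => (-1 : int)%R)); last first.
    by move=> l hl; rewrite ifF; [rewrite ifF //|]; lia.
  rewrite !sumr_const_nat. lia.
- have [q hq] : exists q, r = 2 * q.
    exists r./2; have := odd_double_half r; rewrite (negbTE o) -muln2; lia.
  have e1 : (3 * r) %/ 2 = 3 * q by lia.
  rewrite e1.
  rewrite (big_cat_nat (n := 3 * q + 1)) /=; try lia.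
  rewrite (eq_big_nat _ _ (F2 := fun _ => Posz 2)); last by move=> l hl; rewrite ifT //; lia.
  rewrite [X in (_ + X)%R](eq_big_nat _ _ (F2 := fun _ => (-2 : int)%R)); last first.
    by move=> l hl; rewrite ifF //; lia.
  rewrite !sumr_const_nat. lia.
Qed.

Lemma sum_int_le2 (w : nat -> int) (c : nat -> bool) a n : (forall l, w l <= 2)%R ->
  \sum_(a <= l < n) (c l : nat) <= 1 -> (\sum_(a <= l < n) w l * Posz (c l) <= 2)%R.
Proof.
move=> hw hc.
apply: (@le_trans _ _ (\sum_(a <= l < n) 2 * Posz (c l))%R).
  by apply: ler_sum => l _; apply: ler_wpM2r.
rewrite -mulr_sumr.
have -> : (\sum_(a <= l < n) Posz (c l) = Posz (\sum_(a <= l < n) (c l : nat)))%R.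
  by rewrite -natz natr_sum; apply: eq_bigr => l _; rewrite natz.
lia.
Qed.

Lemma mod_sub t J p : J <= t -> ((t - J) %% p == t %% p) = (p %| J).
Proof.
move=> hJ; rewrite eq_sym.
have := eqn_mod_dvd p (leq_subr J t); rewrite subKn //.
Qed.

Lemma x_init_eq m i t : i < rho m -> 0 < m -> t < kk m ->
  x_init m i t = (t %% pr m i == beta m i).
Proof.
move=> hi hm ht; have [p1 p2 p3] := pr_facts hi.
have p0 : 0 < pr m i by lia.
have ek := divn_eq (kk m) (pr m i); rewrite -/(mu m i) -/(beta m i) in ek.
have bp : beta m i < pr m i by rewrite ltn_pmod.
apply/hasP/eqP.
- case=> l; rewrite mem_iota => hl /eqP ->.
  by rewrite addnC modnMDl modn_small.
- move=> e; exists (t %/ pr m i).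
    rewrite mem_iota add0n.
    have et := divn_eq t (pr m i); rewrite e in et.
    by rewrite -(ltn_pmul2r p0) -(ltn_add2r (beta m i)) -et -ek.
  by rewrite {1}(divn_eq t (pr m i)) e addnC.
Qed.

Lemma diff_lemma t p pa l1 l2 : prime p -> prime pa -> pa != p -> l2 < p -> l1 <= l2 ->
  l2 * pa <= t -> (t - l1 * pa) %% p = (t - l2 * pa) %% p -> l1 = l2.
Proof.
move=> pp ppa ne lp l12 lt e.
have h : t - l2 * pa <= t - l1 * pa by apply: leq_sub2l; apply: leq_mul.
have := eqn_mod_dvd p h; rewrite e eqxx.
have -> : t - l1 * pa - (t - l2 * pa) = (l2 - l1) * pa.
  rewrite mulnBl; have hA : l1 * pa <= l2 * pa by apply: leq_mul.
  move: hA lt; generalize (l1 * pa) (l2 * pa) => A B; lia.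
rewrite Euclid_dvdM // (dvdn_prime2 pp ppa) eq_sym (negbTE ne) orbF => d.
case: (posnP (l2 - l1)) => h3; first lia.
have := dvdn_leq h3 (esym d); lia.
Qed.

Lemma lp_le m a l : 0 < m -> a < rho m -> l <= 2 * rho m -> l * pr m a <= kk m.
Proof.
move=> hm ha hl; have [_ _ p3] := pr_facts ha.
apply: (@leq_trans (2 * rho m * (3 * m - 1))); first by apply: leq_mul; lia.
rewrite /kk (mulnC 2) -mulnA mulnC leq_mul2r; apply/orP; right; lia.
Qed.

Lemma sum_exch m (c : nat -> int) : 0 < m ->
  (\sum_(1 <= j < (kk m).+1) abar m j * c j =
   \sum_(0 <= a < rho m) \sum_(1 <= l < (2 * rho m).+1) wt (rho m) l * c (l * pr m a)%N)%R.
Proof.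
move=> hm.
transitivity (\sum_(1 <= j < (kk m).+1) \sum_(0 <= a < rho m) \sum_(1 <= l < (2 * rho m).+1)
   (if j == l * pr m a then wt (rho m) l * c j else 0))%R.
  apply: eq_bigr => j _; rewrite abar_dec mulr_suml; apply: eq_bigr => a _.
  rewrite mulr_suml; apply: eq_bigr => l _; by case: eqP; rewrite ?mul0r.
rewrite exchange_big; apply: eq_big_nat => a /andP[_ ha].
rewrite exchange_big; apply: eq_big_nat => l /andP[l1 l2].
rewrite (@sum_pick int 1 (kk m).+1 (l * pr m a) (fun j => wt (rho m) l * c j)%R) //.
have [_ p2 _] := pr_facts ha.
rewrite ltnS lp_le // andbT muln_gt0 l1 /=; lia.
Qed.

Lemma thr m i t : 0 < m -> 2 <= rho m -> i < rho m -> kk m <= t ->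
  (theta m <= \sum_(1 <= j < (kk m).+1)
      abar m j * Posz (((t - j) %% pr m i == beta m i)%N : nat))%R
  = (t %% pr m i == beta m i).
Proof.
move=> hm hr hi ht.
rewrite (sum_exch (fun J => Posz (((t - J) %% pr m i == beta m i) : nat)) hm).
have [pi1 pi2 pi3] := pr_facts hi.
have rl := rho_le m.
case: eqP => e.
- have C : forall a l, a < rho m -> 0 < l <= 2 * rho m ->
     ((t - l * pr m a) %% pr m i == beta m i) = (a == i).
    move=> a l ha hl; have [pa1 pa2 pa3] := pr_facts ha.
    rewrite -e mod_sub; last by apply: leq_trans (lp_le hm ha _) ht; lia.
    rewrite Euclid_dvdM // (dvdn_prime2 pi1 pa1).
    have -> : (pr m i %| l) = false.
      apply/negP => /(dvdn_leq (proj1 (andP hl))); lia.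
    rewrite /=; apply/eqP/eqP => [E|->//]; exact: pr_inj ha hi (esym E).
  rewrite (eq_big_nat _ _ (F2 := fun a => if a == i then
       (\sum_(1 <= l < (2 * rho m).+1) wt (rho m) l)%R else 0%R)); last first.
    move=> a /andP[_ ha]; case: eqP => ai.
    + apply: eq_big_nat => l hl; rewrite C // ai eqxx mulr1 //.
    + apply: big1_seq => l; rewrite mem_index_iota /= => hl.
      rewrite C //; move/eqP/negbTE: ai => ->; by rewrite mulr0.
  rewrite (@sum_pick int 0 (rho m) i (fun _ => \sum_(1 <= l < (2 * rho m).+1) wt (rho m) l)%R) //.
  by rewrite wt_sum // /theta lexx.
- apply/negbTE/negP => H.
  have B : forall a, a < rho m ->
     (\sum_(1 <= l < (2 * rho m).+1) wt (rho m) l *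
        Posz (((t - l * pr m a) %% pr m i == beta m i)%N : nat) <= 2 - (if a == i then 2 else 0))%R.
    move=> a ha; have [pa1 pa2 pa3] := pr_facts ha.
    case: eqP => ai.
    + subst a; rewrite subrr big1_seq // => l; rewrite mem_index_iota /= => hl.
      have := mod_sub (pr m i) (leq_trans (lp_le hm hi (proj2 (andP hl))) ht).
      rewrite dvdn_mull ?dvdnn // => /eqP ->.
      by move/eqP/negbTE: e => ->; rewrite mulr0.
    + rewrite subr0; apply: sum_int_le2 => [l|]; first exact: wt_le2.
      have ne : pr m a != pr m i by apply/eqP => E; apply: ai; exact: pr_inj ha hi E.
      have key : forall l1 l2, 1 <= l1 < (2 * rho m).+1 -> 1 <= l2 < (2 * rho m).+1 ->
          l1 <= l2 -> ((t - l1 * pr m a) %% pr m i == beta m i) ->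
          ((t - l2 * pr m a) %% pr m i == beta m i) -> l1 = l2.
        move=> l1 l2 h1 h2 l12 /eqP P1 /eqP P2.
        apply: (diff_lemma (t := t) (p := pr m i) (pa := pr m a)) => //; first lia.
          exact: leq_trans (lp_le hm ha (proj2 (andP h2))) ht.
        by rewrite P1 P2.
      apply: sum_le1 => l1 l2 h1 h2 P1 P2.
      case: (leqP l1 l2) => l12; first exact: key.
      by symmetry; apply: key => //; apply: ltnW.
  have := @ler_sum_nat int 0 (rho m) _ _ (fun a ha => B a (proj2 (andP ha))).
  rewrite sumrB sumr_const_nat (@sum_pick int 0 (rho m) i (fun _ => 2%R)) //.
  move: H; rewrite /theta subn0; set S := (\sum_(0 <= a < rho m) _)%R; lia.
Qed.

Lemma period m i t : 0 < m -> 2 <= rho m -> i < rho m ->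
  nth false (x_hist m i t.+1) t = (t %% pr m i == beta m i).
Proof.
move=> hm hr hi; elim/ltn_ind: t => t IH.
rewrite /= nth_rcons size_hist ltnn eqxx /x_next.
case: ltnP => ht; first exact: x_init_eq.
have k0 : 0 < kk m by rewrite /kk muln_gt0; apply/andP; split; lia.
rewrite -(thr hm hr hi ht); congr (_ <= _)%R.
apply: eq_big_nat => j /andP[j1 j2].
rewrite nth_hist; last lia.
rewrite IH //; lia.
Qed.

Theorem lemma8 (m : nat) (hm : 0 < m) (hrho : 2 <= rho m) (t i : nat) :
  kk m <= t -> i < rho m ->
  mu m i <= \sum_(1 <= j < (kk m).+1) x m i (t - j) <= (mu m i).+1.
Proof.
move=> ht hi.
have [p1 p2 p3] := pr_facts hi.
have p0 : 0 < pr m i by lia.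
rewrite (eq_big_nat _ _ (F2 := fun j => ((t - j) %% pr m i == beta m i) : nat)); last first.
  by move=> j _; rewrite /x period.
rewrite (reidx (fun s => ((s %% pr m i == beta m i) : nat)) ht).
have ek := divn_eq (kk m) (pr m i); rewrite -/(mu m i) -/(beta m i) in ek.
have et : t = (t - kk m) + (mu m i * pr m i + beta m i) by rewrite -ek subnK.
rewrite [X in \sum_(_ <= _ < X) _]et.
apply: window => //; by rewrite ltn_pmod.
Qed.
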